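(* Let $\varSigma$ be a $2k$-dimensional rational sphere on vertex set $[n]$ with vertex coordinates $v_i\in\mathbb{R}^{2k+1}$ forming a linear system of parameters, and suppose $\mathcal{A}^*(\varSigma)$ has the hard Lefschetz property. Then for every subcomplex $\varDelta$ of $\varSigma$ (with the restricted coordinates), $$\kappa_k(\varSigma,\varDelta)\ \le\ \kappa_{k+1}(\varSigma,\varDelta),$$ where $\kappa_i(\varSigma,\varDelta)=\dim\mathrm{coker}\big[\mathcal{A}_i(\varDelta)\to\mathcal{A}_i(\varSigma)\big]$.
   Context: A $2k$-dimensional rational sphere is a simplicial complex which is a rational homology manifold with the rational homology of $S^{2k}$. Let $d=2k+1$. For a simplicial complex $\varGamma$ on vertices from $[n]$ with coordinates $v_i=(v_{i,1},\dots,v_{i,d})\in\mathbb{R}^d$, let $\mathbb{R}[y_1,\dots,y_n]$ be a polynomial ring on which $x_i$ acts by $\partial/\partial y_i$. The stress space $\mathcal{A}_i(\varGamma)$ is the space of homogeneous degree-$i$ polynomials $p(y)$ such that $m(\partial/\partial y)p=0$ for every monomial $m(x)$ whose support is not a face of $\varGamma$, and $\sum_{r}v_{r,j}\,\partial p/\partial y_r=0$ for $j=1,\dots,d$. Since $\varDelta\subset\varSigma$, every stress of $\varDelta$ is a stress of $\varSigma$, giving the inclusion $\mathcal{A}_i(\varDelta)\to\mathcal{A}_i(\varSigma)$. $\mathcal{A}^*(\varSigma)=\mathbb{R}[\varSigma]/(\theta_1,\dots,\theta_d)$ with $\theta_j=\sum_iv_{i,j}x_i$ and $\mathbb{R}[\varSigma]$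 the face ring. The hard Lefschetz property means there is $\ell\in\mathcal{A}^1(\varSigma)$ with multiplication by $\ell^{d-2j}:\mathcal{A}^j(\varSigma)\to\mathcal{A}^{d-j}(\varSigma)$ an isomorphism for all $j\le d/2$. *)

(* Defs.v *)
From HB Require Import structures.
From mathcomp Require Import all_boot all_order all_algebra.
From mathcomp Require Import mpoly.
From mathcomp Require Import reals.
From Stdlib Require Import ClassicalDescription.

Set Implicit Arguments.
Unset Strict Implicit.
Unset Printing Implicit Defensive.

Import Order.TTheory GRing.Theory Num.Theory.
Local Open Scope ring_scope.

Definition asbool (P : Prop) : bool :=
  if excluded_middle_informative P then true else false.

Definition is_complex (n : nat) (G : {set {set 'I_n}}) : Prop :=
  forall F H : {set 'I_n}, H \subset F -> F \in G -> H \in G.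

Definition link (n : nat) (G : {set {set 'I_n}}) (F : {set 'I_n}) :
  {set {set 'I_n}} :=
  [set H in G | [disjoint H & F] && ((H :|: F) \in G)].

(* Chains are indexed by faces; a face of cardinality c is a (c-1)-simplex,
   the empty face giving the augmentation (hence reduced homology).        *)

Definition bd_coef (n : nat) (G : {set {set 'I_n}}) (c : nat)
  (F H : {set 'I_n}) : rat :=
  if (F \in G) && (H \in G) && (#|F| == c) then
    \sum_(v in F | H == F :\ v) (-1) ^+ #|[set u in F | (u < v)%N]|
  else 0.

Definition nsub (n : nat) : nat := #|{set 'I_n}|.

Definition bd_mx (n : nat) (G : {set {set 'I_n}}) (c : nat) :
  'M[rat]_(nsub n, nsub n) :=
  \matrix_(a < nsub n, b < nsub n)
     bd_coef G c (enum_val a) (enum_val b).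

Definition nfaces (n : nat) (G : {set {set 'I_n}}) (c : nat) : nat :=
  #|[set F in G | #|F| == c]|.

(* dimension of the reduced rational homology H~_{c-1}(G; Q)
   = dim ker d_c - rank d_(c+1) *)
Definition rbetti (n : nat) (G : {set {set 'I_n}}) (c : nat) : nat :=
  (nfaces G c - \rank (bd_mx G c) - \rank (bd_mx G c.+1))%N.

(* G has the reduced rational homology of the sphere S^(e-1)
   (e = dimension + 1; e = 0 is the (-1)-sphere {emptyset}) *)
Definition rat_homology_sphere (n : nat) (G : {set {set 'I_n}}) (e : nat) : Prop :=
  forall c : nat, rbetti G c = (c == e) :> nat.

(* A 2k-dimensional rational sphere: a simplicial complex which is a rational
   homology manifold (the link of every nonempty face F has the rational
   homology of S^(2k - |F|)) having the rational homology of S^(2k)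
   (the case F = emptyset, whose link is the complex itself). *)
Definition rational_sphere (n k : nat) (S : {set {set 'I_n}}) : Prop :=
  [/\ is_complex S, set0 \in S &
      forall F, F \in S ->
        (#|F| <= k.*2.+1)%N /\ rat_homology_sphere (link S F) (k.*2.+1 - #|F|)].

Section Poly.
Variable R : realType.
Variables (n d : nat).
Variable v : 'I_n -> 'I_d -> R.

Definition xF (F : {set 'I_n}) : {mpoly R[n]} := \prod_(i in F) 'X_i.

Definition theta (j : 'I_d) : {mpoly R[n]} := \sum_(i < n) v i j *: 'X_i.

(* membership in the ideal I_G + (theta_1, ..., theta_d) of R[x_1..x_n],
   where the Stanley-Reisner ideal I_G is generated by the x_F, F not in G *)
Definition in_ideal (G : {set {set 'I_n}}) (p : {mpoly R[n]}) : Prop :=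
  exists (q : 'I_d -> {mpoly R[n]}) (g : {set 'I_n} -> {mpoly R[n]}),
    p = \sum_(j < d) theta j * q j + \sum_(F | F \notin G) xF F * g F.

(* theta_1..theta_d is a linear system of parameters for R[G]:
   the quotient A(G) = R[G]/(theta) is finite-dimensional, i.e. its graded
   pieces vanish in all large degrees. *)
Definition is_lsop (G : {set {set 'I_n}}) : Prop :=
  exists N : nat, forall j : nat, (N <= j)%N ->
    forall p : {mpoly R[n]}, p \is j.-homog -> in_ideal G p.

(* Hard Lefschetz property of A^*(G): some l in A^1(G) (represented by a
   linear form) such that multiplication by l^(d-2j) : A^j -> A^(d-j) is an
   isomorphism (injective and surjective) for every j <= d/2. *)
Definition hard_lefschetz (G : {set {set 'I_n}}) : Prop :=
  exists l : {mpoly R[n]}, l \is 1.-homog /\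
    forall j : nat, (j.*2 <= d)%N ->
      (forall p : {mpoly R[n]}, p \is j.-homog ->
          in_ideal G (l ^+ (d - j.*2) * p) -> in_ideal G p) /\
      (forall q : {mpoly R[n]}, q \is (d - j)%N.-homog ->
          exists p : {mpoly R[n]}, p \is j.-homog /\
            in_ideal G (q - l ^+ (d - j.*2) * p)).

(* polynomials p(y) in R[y_1..y_n], x_i acting as d/dy_i *)

Definition mono_supp (m : 'X_{1..n}) : {set 'I_n} := [set i | m i != 0%N].

Definition is_stress (G : {set {set 'I_n}}) (i : nat) (p : {mpoly R[n]}) : Prop :=
  [/\ p \is i.-homog,
      (forall m : 'X_{1..n}, mono_supp m \notin G -> mderivm m p = 0) &
      (forall j : 'I_d, \sum_(r < n) v r j *: mderiv r p = 0)].

(* kappa_i(S, D) = dim coker [A_i(D) -> A_i(S)], i.e. the maximal number of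
   stresses of S that are linearly independent modulo the stresses of D.
   (The range bound 'C(n+i,i) exceeds the dimension of the space of degree-i
   homogeneous polynomials, so it does not cut anything.) *)
Definition kappa (S D : {set {set 'I_n}}) (i : nat) : nat :=
  \max_(e < 'C(n + i, i).+1 |
        asbool (exists ps : 'I_e -> {mpoly R[n]},
          (forall t, is_stress S i (ps t)) /\
          (forall c : 'I_e -> R,
              is_stress D i (\sum_(t < e) c t *: ps t) -> forall t, c t = 0)))
    e.

End Poly.

(* Main.v *)
Require Import Defs.
From HB Require Import structures.
From mathcomp Require Import all_boot all_order all_algebra.
From mathcomp Require Import mpoly.
From mathcomp Require Import reals.
From Stdlib Require Import IndefiniteDescription ClassicalDescription.
Set Implicit Arguments.
Unset Strict Implicit.
Unset Printing Implicit Defensive.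
Import Order.TTheory GRing.Theory Num.Theory.
Local Open Scope ring_scope.

Lemma solve_ord (F : fieldType) (p q : nat) (A : 'I_p -> 'I_q -> F) (b : 'I_p -> F) :
  (forall u : 'I_p -> F, (forall j, \sum_i u i * A i j = 0) -> \sum_i u i * b i = 0) ->
  exists x : 'I_q -> F, forall i, \sum_j A i j * x j = b i.
Proof.
move=> H.
pose M : 'M[F]_(q, p) := \matrix_(j, i) A i j.
pose B : 'rV[F]_p := \row_i b i.
have sBM : (B <= M)%MS.
  rewrite submxE; apply/eqP/matrixP => z c; rewrite !mxE.
  have e1 : forall j, \sum_i cokermx M i c * A i j = 0.
    move=> j; move/matrixP: (mulmx_coker M) => /(_ j c).
    rewrite !mxE => E; rewrite -[RHS]E.
    by apply: eq_bigr => i _; rewrite !mxE mulrC.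
  rewrite -[RHS](H _ e1).
  apply: eq_bigr => i _; rewrite !mxE mulrC.
  by case: z => [[]] //.
case/submxP: sBM => D eD.
exists (fun j => D 0 j) => i.
move/matrixP: eD => /(_ 0 i); rewrite !mxE => ->.
by apply: eq_bigr => j _; rewrite !mxE mulrC.
Qed.

Lemma sum_enum (F : fieldType) (I : finType) (G : I -> F) :
  \sum_(i < #|I|) G (enum_val i) = \sum_(i : I) G i.
Proof.
pose e := fun i : 'I_#|I| => enum_val i.
rewrite [RHS](reindex e) //.
by exists enum_rank => i _; rewrite /e ?enum_valK ?enum_rankK.
Qed.

Lemma solve_lin (F : fieldType) (I J : finType) (A : I -> J -> F) (b : I -> F) :
  (forall u : I -> F, (forall j, \sum_i u i * A i j = 0) -> \sum_i u i * b i = 0) ->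
  exists x : J -> F, forall i, \sum_j A i j * x j = b i.
Proof.
move=> H.
have key : forall u : ('I_#|I|) -> F,
  (forall j : 'I_#|J|, \sum_i u i * A (enum_val i) (enum_val j) = 0) ->
  \sum_i u i * b (enum_val i) = 0.
  move=> u Hu.
  have := H (fun i => u (enum_rank i)).
  rewrite -(sum_enum (fun i => u (enum_rank i) * b i)).
  under eq_bigr => i _ do rewrite enum_valK.
  apply => j.
  rewrite -(sum_enum (fun i => u (enum_rank i) * A i j)).
  under eq_bigr => i _ do rewrite enum_valK.
  have := Hu (enum_rank j); rewrite enum_rankK; by [].
have [x Hx] := solve_ord key.
exists (fun j => x (enum_rank j)) => i.
have := Hx (enum_rank i); rewrite enum_rankK => <-.
rewrite -(sum_enum (fun j => A i j * x (enum_rank j))).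
by apply: eq_bigr => j _; rewrite enum_valK.
Qed.

Section Main.
Variable R : realType.
Variable n : nat.
Implicit Types p q f g : {mpoly R[n]}.

Definition mf (m : 'X_{1..n}) : nat := \prod_(i < n) (m i)`!.
Definition W p m : R := p@_m * (mf m)%:R.

Lemma mf_neq0 m : (mf m)%:R != 0 :> R.
Proof. by rewrite pnatr_eq0 -lt0n prodn_gt0 // => i; rewrite fact_gt0. Qed.

Lemma W_eq0 p m : W p m = 0 -> p@_m = 0.
Proof. by move/eqP; rewrite /W mulf_eq0 (negbTE (mf_neq0 m)) orbF => /eqP. Qed.

Lemma W_mderivm a p b : W (mderivm a p) b = W p (a + b).
Proof.
rewrite /W mcoeff_mderivm mulrnAl -mulrnAr -mulrnA; congr (_ * _%:R).
rewrite /mf -big_split /=; apply: eq_bigr => i _; rewrite mnmDE.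
by rewrite mulnC -{2}(addKn (a i) (b i)) ffact_fact // leq_addr.
Qed.

Lemma W_sum (I : Type) (r : seq I) (P : pred I) (F : I -> {mpoly R[n]}) m :
  W (\sum_(i <- r | P i) F i) m = \sum_(i <- r | P i) W (F i) m.
Proof. by rewrite /W raddf_sum big_distrl. Qed.

Lemma WZ c p m : W (c *: p) m = c * W p m.
Proof. by rewrite /W mcoeffZ mulrA. Qed.

Lemma W0 m : W 0 m = 0.
Proof. by rewrite /W mcoeff0 mul0r. Qed.

Lemma W_homog d p m : p \is d.-homog -> mdeg m != d -> W p m = 0.
Proof. by move=> hp hm; rewrite /W (dhomog_nemf_coeff hp hm) mul0r. Qed.

Lemma homog_mderivm d a p : p \is d.-homog -> mderivm a p \is (d - mdeg a)%N.-homog.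
Proof.
move=> hp; apply/dhomogP => b; rewrite mcoeff_msupp mcoeff_mderivm.
have [e|ne] := eqVneq (mdeg (a + b)) d.
  by move=> _; rewrite -e mdegD addKn.
by rewrite (dhomog_nemf_coeff hp ne) mul0rn eqxx.
Qed.


Definition Pr (K : nat) f p : R := \sum_(m : 'X_{1..n < K}) f@_m * W p m.

Lemma Pr_sum K (I : Type) (r : seq I) (P : pred I) (F : I -> {mpoly R[n]}) p :
  Pr K (\sum_(i <- r | P i) F i) p = \sum_(i <- r | P i) Pr K (F i) p.
Proof.
rewrite /Pr; under eq_bigr => m _ do rewrite raddf_sum big_distrl /=.
by rewrite exchange_big.
Qed.

Lemma PrZ K c f p : Pr K (c *: f) p = c * Pr K f p.
Proof.
rewrite /Pr mulr_sumr. apply: eq_bigr => m _. by rewrite mcoeffZ -mulrA.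
Qed.

Lemma PrD K f g p : Pr K (f + g) p = Pr K f p + Pr K g p.
Proof.
rewrite /Pr -big_split /=; apply: eq_bigr => m _.
by rewrite (mcoeffD m f g) mulrDl.
Qed.

Lemma PrN K f p : Pr K (- f) p = - Pr K f p.
Proof.
by rewrite -scaleN1r PrZ mulN1r.
Qed.

Lemma Pr0 K p : Pr K 0 p = 0.
Proof. by rewrite /Pr big1 // => m _; rewrite mcoeff0 mul0r. Qed.

Lemma Pr_X K D p a : p \is D.-homog -> (D < K)%N -> Pr K 'X_[a] p = W p a.
Proof.
move=> hp hD; rewrite /Pr; case: (ltnP (mdeg a) K) => h.
  rewrite (bigD1 (BMultinom h)) //= mcoeffX eqxx mul1r big1 ?addr0 //.
  move=> m ne; rewrite mcoeffX; case: eqP => [e|]; last by rewrite mul0r.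
  by exfalso; move/eqP: ne; apply; apply: val_inj.
rewrite big1; last first.
  move=> m _; rewrite mcoeffX; case: eqP => [e|]; last by rewrite mul0r.
  by move: (bmdeg m); rewrite -e ltnNge h.
rewrite (W_homog hp) //; apply/eqP => e; move: h; rewrite e leqNgt hD.
by [].
Qed.

Definition mF (F : {set 'I_n}) : 'X_{1..n} := (\big[+%MM/0%MM]_(i in F) U_(i))%MM.

Lemma mFE F i : mF F i = (i \in F).
Proof.
rewrite /mF mnm_sumE.
case: (boolP (i \in F)) => hi.
  rewrite (bigD1 i) //= mnm1E eqxx big1 ?addn0 // => j /andP [_ ne].
  by rewrite mnm1E (negbTE ne).
by rewrite big1 // => j hj; rewrite mnm1E; case: eqP => // e; move: hi; rewrite -e hj.
Qed.

Lemma mono_supp_mF F : mono_supp (mF F) = F.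
Proof. by apply/setP => i; rewrite inE mFE; case: (i \in F). Qed.

Lemma xF_X F m : xF R F * 'X_[m] = 'X_[mF F + m] :> {mpoly R[n]}.
Proof.
rewrite mpolyXD; congr (_ * _); rewrite /xF /mF.
by rewrite (big_morph (fun m => 'X_[m] : {mpoly R[n]}) (@mpolyXD _ _) (@mpolyX0 _ _)).
Qed.


Variables (d : nat) (v : 'I_n -> 'I_d -> R).

Lemma theta_X j m : theta v j * 'X_[m] = \sum_(i < n) v i j *: 'X_[(U_(i) + m)%MM].
Proof.
rewrite /theta mulr_suml; apply: eq_bigr => i _.
by rewrite -scalerAl -mpolyXD.
Qed.

Lemma Pr_thetaX K D p j m : p \is D.-homog -> (D < K)%N ->
  Pr K (theta v j * 'X_[m]) p = W (\sum_(i < n) v i j *: mderiv i p) m.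
Proof.
move=> hp hD; rewrite theta_X Pr_sum W_sum; apply: eq_bigr => i _.
by rewrite PrZ WZ (Pr_X _ hp hD) -mderivmU1m W_mderivm.
Qed.

Definition Dl l p := \sum_(c <- msupp l) l@_c *: mderivm c p.

Lemma W_Dl l p b : W (Dl l p) b = \sum_(c <- msupp l) l@_c * W p (c + b).
Proof.
by rewrite /Dl W_sum; apply: eq_bigr => c _; rewrite WZ W_mderivm.
Qed.

Lemma Pr_lX K D p l b : p \is D.-homog -> (D < K)%N ->
  Pr K (l * 'X_[b]) p = W (Dl l p) b.
Proof.
move=> hp hD; rewrite W_Dl {1}(mpolyE l) mulr_suml Pr_sum.
by apply: eq_bigr => c _; rewrite -scalerAl -mpolyXD PrZ (Pr_X _ hp hD).
Qed.

Lemma Pr_xFX K D p F m : p \is D.-homog -> (D < K)%N ->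
  Pr K (xF R F * 'X_[m]) p = W p (mF F + m).
Proof. by move=> hp hD; rewrite xF_X (Pr_X _ hp hD). Qed.

Lemma Pr_ideal K i G q g : is_stress v G i q -> (i < K)%N -> in_ideal v G g ->
  Pr K g q = 0.
Proof.
case=> hq hmon hth hK [qq [gg ->]].
rewrite PrD !Pr_sum !big1 ?addr0 //.
  move=> F hF; rewrite {1}(mpolyE (gg F)) mulr_sumr Pr_sum big1 // => m _.
  rewrite -scalerAr PrZ (Pr_xFX _ _ hq hK) -W_mderivm hmon ?W0 ?mulr0 //.
  by rewrite mono_supp_mF.
move=> j _; rewrite {1}(mpolyE (qq j)) mulr_sumr Pr_sum big1 // => m _.
by rewrite -scalerAr PrZ (Pr_thetaX _ _ hq hK) hth W0 mulr0.
Qed.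


Lemma mderivmC a b p : mderivm a (mderivm b p) = mderivm b (mderivm a p).
Proof. by rewrite -!mderivmDm addmC. Qed.

Lemma Dl_homog l p j : l \is 1.-homog -> p \is j.+1.-homog -> Dl l p \is j.-homog.
Proof.
move=> hl hp; rewrite /Dl big_seq; apply: rpred_sum => c hc; apply: rpredZ.
by have := homog_mderivm c hp; rewrite (dhomog_mf hl hc) subn1.
Qed.

Lemma Dl_sumZ l e (c : 'I_e -> R) (ps : 'I_e -> {mpoly R[n]}) :
  Dl l (\sum_(t < e) c t *: ps t) = \sum_(t < e) c t *: Dl l (ps t).
Proof.
rewrite /Dl; under eq_bigr => c0 _ do rewrite linear_sum scaler_sumr.
rewrite exchange_big /=; apply: eq_bigr => t _; rewrite scaler_sumr.
by apply: eq_bigr => c0 _; rewrite linearZ /= !scalerA mulrC.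
Qed.

Lemma Dl_stress (G : {set {set 'I_n}}) j l p : l \is 1.-homog -> is_stress v G j.+1 p ->
  is_stress v G j (Dl l p).
Proof.
move=> hl [hp hmon hth]; split; first exact: Dl_homog.
  move=> m hm; rewrite /Dl linear_sum big1 // => c _.
  by rewrite linearZ /= mderivmC hmon // linear0 scaler0.
move=> i; rewrite /Dl.
under eq_bigr => r _ do rewrite -mderivmU1m linear_sum scaler_sumr.
rewrite exchange_big /= big1 // => c _.
transitivity (l@_c *: mderivm c (\sum_(r < n) v r i *: mderiv r p)); last first.
  by rewrite hth linear0 scaler0.
rewrite linear_sum scaler_sumr; apply: eq_bigr => r _.
by rewrite !linearZ /= !scalerA mulrC -mderivmU1m mderivmC.
Qed.

Lemma ann_stress (G : {set {set 'I_n}}) D p : p \is D.+1.-homog ->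
  (forall F m, F \notin G -> mdeg (mF F + m) = D.+1 -> W p (mF F + m) = 0) ->
  (forall j m, mdeg m = D -> W (\sum_(i < n) v i j *: mderiv i p) m = 0) ->
  is_stress v G D.+1 p.
Proof.
move=> hp hmon hth; split => //.
  move=> m0 hm0; apply/mpolyP => b; rewrite mcoeff_mderivm mcoeff0.
  suff -> : p@_(m0 + b) = 0 by rewrite mul0rn.
  have [e|ne] := eqVneq (mdeg (m0 + b)) D.+1; last exact: dhomog_nemf_coeff hp ne.
  apply: W_eq0.
  have le : (mF (mono_supp m0) <= m0 + b)%MM.
    apply/mnm_lepP => i; rewrite mFE inE mnmDE.
    by case: (m0 i) => //= ? ; rewrite leq_addr.
  have ee : (m0 + b = mF (mono_supp m0) + (m0 + b - mF (mono_supp m0)))%MM.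
    by rewrite [RHS]addmC submK.
  by rewrite ee; apply: hmon => //; rewrite -ee.
move=> j; apply/mpolyP => b; rewrite mcoeff0.
have [e|ne] := eqVneq (mdeg b) D; first by apply: W_eq0; apply: hth.
apply: (dhomog_nemf_coeff _ ne); apply: rpred_sum => i _; apply: rpredZ.
by have := homog_mderivm U_(i) hp; rewrite mderivmU1m mdeg1 subn1.
Qed.


Lemma theta_homog j : theta v j \is 1.-homog.
Proof.
by rewrite /theta; apply: rpred_sum => i _; apply: rpredZ; rewrite dhomogX; apply/eqP; exact: mdeg1.
Qed.

Section Lift.
Variables (k : nat) (G : {set {set 'I_n}}) (l q : {mpoly R[n]}).
Hypothesis hl : l \is 1.-homog.
Hypothesis HL : forall g, g \is k.-homog -> in_ideal v G (l * g) -> in_ideal v G g.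
Hypothesis hq : is_stress v G k q.

Local Notation T := ('X_{1..n < k.+2}).
Local Notation I := ((({set 'I_n} * T) + ('I_d * T)) + T)%type.

Definition fpol (i : I) : {mpoly R[n]} :=
  match i with
  | inl (inl p) => if (p.1 \notin G) && (mdeg (mF p.1 + p.2) == k.+1)
                   then xF R p.1 * 'X_[p.2] else 0
  | inl (inr p) => if mdeg p.2 == k then theta v p.1 * 'X_[p.2] else 0
  | inr b => if mdeg b == k then l * 'X_[b] else 0
  end.

Definition rhs (i : I) : R :=
  match i with
  | inr b => if mdeg b == k then W q b else 0
  | _ => 0
  end.

Lemma fpol_homog i : fpol i \is k.+1.-homog.
Proof.
case: i => [[[F m]|[j m]]|b] /=.
- case: ifP => [/andP [_ /eqP e]|_]; last exact: rpred0.
  by rewrite xF_X dhomogX; apply/eqP; exact: e.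
- case: ifP => [/eqP e|_]; last exact: rpred0.
  apply: (dhomogM (d:=1%N) (e:=k)); first exact: theta_homog.
  by rewrite dhomogX; apply/eqP; exact: e.
- case: ifP => [/eqP e|_]; last exact: rpred0.
  apply: (dhomogM (d:=1%N) (e:=k)); first exact: hl.
  by rewrite dhomogX; apply/eqP; exact: e.
Qed.


Lemma lift : exists p, is_stress v G k.+1 p /\ Dl l p = q.
Proof.
have [hqh _ _] := hq.
have hk2 : (k < k.+2)%N by [].
pose A (i : I) (m : T) := (fpol i)@_m * (mdeg m == k.+1)%:R.
have [x Hx] : exists x : T -> R, forall i, \sum_m A i m * x m = rhs i.
  apply: solve_lin => u Hu.
  pose Fp := \sum_i u i *: fpol i.
  have F0 : Fp = 0.
    apply/mpolyP => m; rewrite mcoeff0 /Fp raddf_sum /=.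
    have [e|ne] := eqVneq (mdeg m) k.+1.
      have hm : (mdeg m < k.+2)%N by rewrite e.
      rewrite -[RHS](Hu (BMultinom hm)); apply: eq_bigr => i _.
      by rewrite mcoeffZ /A /= e eqxx mulr1.
    by rewrite big1 // => i _; rewrite mcoeffZ (dhomog_nemf_coeff (fpol_homog i) ne) mulr0.
  pose g := \sum_(b : T) u (inr b) *: (if mdeg b == k then 'X_[b] else 0 : {mpoly R[n]}).
  pose Q1 j := \sum_(m : T) u (inl (inr (j, m))) *:
     (if mdeg m == k then 'X_[m] else 0 : {mpoly R[n]}).
  pose G1 F := \sum_(m : T) u (inl (inl (F, m))) *:
     (if mdeg (mF F + m) == k.+1 then 'X_[m] else 0 : {mpoly R[n]}).
  have eF : Fp = (\sum_(F | F \notin G) xF R F * G1 F + \sum_j theta v j * Q1 j) + l * g.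
    rewrite /Fp big_sumType /= big_sumType /=; congr (_ + _ + _).
    - rewrite (eq_bigr (fun z : {set 'I_n} * T => (fun F m => u (inl (inl (F, m))) *: fpol (inl (inl (F, m)))) z.1 z.2)); last by case.
      rewrite -(pair_bigA _ (fun F m => u (inl (inl (F, m))) *: fpol (inl (inl (F, m))))) /=.
      rewrite [RHS]big_mkcond /=; apply: eq_bigr => F _.
      case: ifP => hF.
        rewrite /G1 mulr_sumr; apply: eq_bigr => m _; rewrite -scalerAr /=.
        by case: ifP => _; rewrite ?mulr0.
      by rewrite big1 // => m _ /=; rewrite scaler0.
    - rewrite (eq_bigr (fun z : 'I_d * T => (fun j m => u (inl (inr (j, m))) *: fpol (inl (inr (j, m)))) z.1 z.2)); last by case.
      rewrite -(pair_bigA _ (fun j m => u (inl (inr (j, m))) *: fpol (inl (inr (j, m))))) /=.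
      apply: eq_bigr => j _.
      rewrite /Q1 mulr_sumr; apply: eq_bigr => m _; rewrite -scalerAr /=.
      by case: ifP => _; rewrite ?mulr0.
    - rewrite /g mulr_sumr; apply: eq_bigr => b _; rewrite -scalerAr /=.
      by case: ifP => _; rewrite ?mulr0.
  have hlg : in_ideal v G (l * g).
    exists (fun j => - Q1 j), (fun F => - G1 F).
    have -> : l * g = - ((\sum_(F | F \notin G) xF R F * G1 F) + \sum_j theta v j * Q1 j).
      by apply/eqP; rewrite -addr_eq0 addrC -eF F0.
    rewrite opprD addrC; congr (_ + _); rewrite -sumrN; apply: eq_bigr => ? _; by rewrite mulrN.
  have hg : g \is k.-homog.
    apply: rpred_sum => b _; apply: rpredZ; case: ifP => [/eqP e|_]; last exact: rpred0.
    by rewrite dhomogX; apply/eqP; exact: e.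
  have := Pr_ideal hq hk2 (HL hg hlg).
  rewrite /g Pr_sum => E; rewrite -[RHS]E.
  rewrite big_sumType /= big_sumType /=.
  rewrite [X in X + _ + _]big1; last by move=> ? _; rewrite mulr0.
  rewrite [X in _ + X + _]big1; last by move=> ? _; rewrite mulr0.
  rewrite !add0r.
  apply: eq_bigr => b _; rewrite PrZ; case: ifP => _; last by rewrite Pr0.
  by rewrite (Pr_X _ hqh hk2).
pose p := \sum_(m : T) ((mdeg m == k.+1)%:R * x m / (mf m)%:R) *: ('X_[m] : {mpoly R[n]}).
have Wp : forall m : T, W p m = (mdeg m == k.+1)%:R * x m.
  move=> m; rewrite /W /p raddf_sum /= (bigD1 m) //= big1 ?addr0.
    by rewrite mcoeffZ mcoeffX eqxx mulr1 divfK // mf_neq0.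
  move=> m' ne; rewrite mcoeffZ mcoeffX.
  have -> : ((m' : 'X_{1..n}) == m) = false by apply/negbTE; exact: ne.
  by rewrite mulr0.
have hp : p \is k.+1.-homog.
  apply: rpred_sum => m _; case: (eqVneq (mdeg m) k.+1) => e.
    by apply: rpredZ; rewrite dhomogX; apply/eqP; exact: e.
  by rewrite !mul0r scale0r; exact: rpred0.
have Prp : forall i, Pr k.+2 (fpol i) p = rhs i.
  by move=> i; rewrite -Hx /Pr; apply: eq_bigr => m _; rewrite Wp /A mulrA.
have hk3 : (k.+1 < k.+2)%N by [].
exists p; split.
- apply: ann_stress => //.
  + move=> F m hF e.
    have hm : (mdeg m < k.+2)%N by rewrite ltnS -e mdegD leq_addl.
    have := Prp (inl (inl (F, BMultinom hm))).
    by rewrite /= hF e eqxx /= (Pr_xFX _ _ hp hk3).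
  + move=> j m e.
    have hm : (mdeg m < k.+2)%N by rewrite e.
    have := Prp (inl (inr (j, BMultinom hm))).
    by rewrite /= e eqxx (Pr_thetaX _ _ hp hk3).
- apply/mpolyP => b; have [e|ne] := eqVneq (mdeg b) k.
    have hb : (mdeg b < k.+2)%N by rewrite e.
    have := Prp (inr (BMultinom hb)).
    rewrite /= e eqxx (Pr_lX _ _ hp hk3) /W => /mulIf; apply; exact: mf_neq0.
  by rewrite (dhomog_nemf_coeff (Dl_homog hl hp) ne) (dhomog_nemf_coeff hqh ne).
Qed.

End Lift.

End Main.

Theorem mainTheorem8 (R : realType) (n k : nat)
  (Sigma Delta : {set {set 'I_n}}) (v : 'I_n -> 'I_(k.*2.+1) -> R) :
  rational_sphere k Sigma ->
  is_lsop v Sigma ->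
  hard_lefschetz v Sigma ->
  is_complex Delta -> Delta \subset Sigma ->
  (kappa v Sigma Delta k <= kappa v Sigma Delta k.+1)%N.
Proof.
move=> _ _ [l [hl HLl]] _ _.
have HL : forall g, g \is k.-homog -> in_ideal v Sigma (l * g) -> in_ideal v Sigma g.
  move=> g hg hi; have [h1 _] := HLl k (leqnSn _).
  by apply: h1 hg _; rewrite subSnn expr1.
rewrite /kappa; apply/bigmax_leqP => e He.
move: He; rewrite /asbool; case: excluded_middle_informative => // [[ps [hps hind]]] _.
have hlift : forall t, exists p, is_stress v Sigma k.+1 p /\ Dl l p = ps t.
  by move=> t; apply: (lift hl HL (hps t)).
pose pp t := proj1_sig (constructive_indefinite_description _ (hlift t)).
have hpp : forall t, is_stress v Sigma k.+1 (pp t) /\ Dl l (pp t) = ps t.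
  by move=> t; rewrite /pp; case: constructive_indefinite_description.
have he : (e < 'C(n + k.+1, k.+1).+1)%N.
  apply: leq_trans (ltn_ord e) _; rewrite ltnS addnS binS leq_addl.
  by [].
apply: (@leq_bigmax_cond _ _ _ (Ordinal he)) => /=.
rewrite /asbool; case: excluded_middle_informative => // [[]].
exists pp; split; first by move=> t; case: (hpp t).
move=> c hD; apply: hind.
have := Dl_stress hl hD; rewrite Dl_sumZ.
by under eq_bigr => t _ do rewrite (proj2 (hpp t)).
Qed.
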